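(* Let $\theta=(\{X_s\}_{s\in S},\{\theta_s\}_{s\in S})$ and $\gamma=(\{Y_t\}_{t\in T},\{\gamma_t\}_{t\in T})$ be almost ample topological partial actions of inverse semigroups $S$ and $T$ on spaces $X$ and $Y$, and suppose the groupoids of germs $S\ltimes X$ and $T\ltimes Y$ are isomorphic as topological groupoids. Then $\theta$ and $\gamma$ are continuously orbit equivalent.
   Context: A topological partial action $\theta$ of an inverse semigroup $S$ on $X$ consists of open $X_s\subseteq X$ and homeomorphisms $\theta_s:X_{s^*}\to X_s$ with $s\mapsto\theta_s$ a partial homomorphism into the inverse semigroup of partial bijections of $X$ (i.e. $\theta_{s^*}=\theta_s^{-1}$, $\theta_s\theta_t\le\theta_{st}$, $s\le t\Rightarrow\theta_s\le\theta_t$, where $s\le t$ iff $s=ts^*s$) and $X=\bigcup_{e\in E(S)}X_e$, $E(S)$ the idempotents. A Hausdorff space is ultraparacompact if every open cover has a refinement consisting of pairwise disjoint clopen sets. $\theta$ is almost ample if $X$ is locally compact Hausdorff and every $X_s$ ($s\in S$) is ultraparacompact. Groupoid of germs $S\ltimes X$: germs $[s,x]$ of pairs $(s,x)$ with $x\in X_{s^*}$, where $(s,x)\sim(t,y)$ iff $x=y$ and some $u\le s,t$ has $x\in X_{u^*}$; source $x$, range $\theta_s(x)$, product $[s,x][t,y]=[st,y]$ when $x=\theta_t(y)$, inverse $[s^*,\theta_s(x)]$, unit space identified with $X$; topology with basis $[s,U]=\{[s,x]:x\in U\}$, $U\subseteq X_{s^*}$ open. Continuous orbit equivalence: writing $S_x=\{s:x\in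 X_{s^*}\}$ and $S*X=\{(s,x):x\in X_{s^*}\}$ (with $S,T$ discrete), there exist a homeomorphism $\varphi:X\to Y$ and continuous $a:S*X\to T$, $b:T*Y\to S$ with $a(s,x)\in T_{\varphi(x)}$, $b(t,y)\in S_{\varphi^{-1}(y)}$, $\varphi(\theta_s(x))=\gamma_{a(s,x)}(\varphi(x))$ and $\varphi^{-1}(\gamma_t(y))=\theta_{b(t,y)}(\varphi^{-1}(y))$ for all $x$, $s\in S_x$, $y$, $t\in T_y$. *)

(* Defs.v *)
From HB Require Import structures.
From mathcomp Require Import all_boot all_order.
From mathcomp Require Import all_classical all_reals all_analysis.
Set Implicit Arguments.
Unset Strict Implicit.
Unset Printing Implicit Defensive.
Local Open Scope classical_set_scope.

Definition inverse_semigroup (S : Type) (mul : S -> S -> S) (star : S -> S) :=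
  [/\ (forall a b c, mul a (mul b c) = mul (mul a b) c),
      (forall s, mul (mul s (star s)) s = s),
      (forall s, mul (mul (star s) s) (star s) = star s) &
      (forall s t, mul (mul s t) s = s -> mul (mul t s) t = t -> t = star s)].

Definition idempotent_el (S : Type) (mul : S -> S -> S) (e : S) := mul e e = e.

Definition isg_le (S : Type) (mul : S -> S -> S) (star : S -> S) (s t : S) :=
  s = mul t (mul (star s) s).

(* Xd s is X_s; th s is theta_s, a homeomorphism X_{s^*} -> X_s (values of
   th s outside X_{s^*} are irrelevant). *)
Definition top_partial_action (S : Type) (mul : S -> S -> S) (star : S -> S)
  (X : topologicalType) (Xd : S -> set X) (th : S -> X -> X) :=
  (forall s, open (Xd s)) /\
      (forall s, forall x, Xd (star s) x -> Xd s (th s x)) /\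
      (forall s, {within Xd (star s), continuous (th s)}) /\
      (forall s x, Xd (star s) x -> th (star s) (th s x) = x) /\
      (forall s t x, Xd (star t) x -> Xd (star s) (th t x) ->
          Xd (star (mul s t)) x /\ th (mul s t) x = th s (th t x)) /\
      (forall s t, isg_le mul star s t ->
          forall x, Xd (star s) x -> Xd (star t) x /\ th s x = th t x) /\
      (forall x, exists e, idempotent_el mul e /\ Xd e x).

Definition rel_open (X : topologicalType) (A V : set X) :=
  exists O : set X, open O /\ V = A `&` O.
Definition rel_closed (X : topologicalType) (A V : set X) :=
  exists C : set X, closed C /\ V = A `&` C.

Definition ultraparacompact (X : topologicalType) (A : set X) :=
  forall Cov : set (set X),
    (forall V, Cov V -> rel_open A V) ->
    \bigcup_(V in Cov) V = A ->
    exists R : set (set X),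
      [/\ (forall W, R W -> rel_open A W /\ rel_closed A W),
          (forall W, R W -> exists2 V, Cov V & W `<=` V),
          (forall W W', R W -> R W' -> W <> W' -> W `&` W' = set0) &
          \bigcup_(W in R) W = A].

Definition almost_ample (S : Type) (mul : S -> S -> S) (star : S -> S)
  (X : topologicalType) (Xd : S -> set X) (th : S -> X -> X) :=
  [/\ hausdorff_space X, locally_compact [set: X] &
      forall s, ultraparacompact (Xd s)].

Definition germ_rel (S : Type) (mul : S -> S -> S) (star : S -> S)
  (X : Type) (Xd : S -> set X) (p q : S * X) :=
  p.2 = q.2 /\ exists u, [/\ isg_le mul star u p.1, isg_le mul star u q.1 &
                            Xd (star u) p.2].

Definition germ (S : Type) (mul : S -> S -> S) (star : S -> S)
  (X : Type) (Xd : S -> set X) (s : S) (x : X) : set (S * X) :=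
  [set p | germ_rel mul star Xd p (s, x)].

Definition germs (S : Type) (mul : S -> S -> S) (star : S -> S)
  (X : Type) (Xd : S -> set X) : set (set (S * X)) :=
  [set g | exists s x, Xd (star s) x /\ g = germ mul star Xd s x].

(* product: gmul g h k iff g h is defined and equals k; i.e.
   g = [s,x], h = [t,y], x = theta_t(y), k = [st,y] *)
Definition germ_mul (S : Type) (mul : S -> S -> S) (star : S -> S)
  (X : Type) (Xd : S -> set X) (th : S -> X -> X)
  (g h k : set (S * X)) :=
  exists s x t y, [/\ Xd (star s) x, Xd (star t) y & x = th t y] /\
     [/\ g = germ mul star Xd s x, h = germ mul star Xd t y &
     k = germ mul star Xd (mul s t) y].

Definition germ_basic (S : Type) (mul : S -> S -> S) (star : S -> S)
  (X : Type) (Xd : S -> set X) (s : S) (U : set X) : set (set (S * X)) :=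
  [set g | exists2 x, U x & g = germ mul star Xd s x].

Definition germ_open (S : Type) (mul : S -> S -> S) (star : S -> S)
  (X : topologicalType) (Xd : S -> set X) (W : set (set (S * X))) :=
  W `<=` germs mul star Xd /\
  forall g, W g -> exists s (U : set X),
    [/\ open U, U `<=` Xd (star s), germ_basic mul star Xd s U g &
        germ_basic mul star Xd s U `<=` W].

Definition germ_groupoid_iso
  (S : Type) (mulS : S -> S -> S) (starS : S -> S)
  (X : topologicalType) (Xd : S -> set X) (th : S -> X -> X)
  (T : Type) (mulT : T -> T -> T) (starT : T -> T)
  (Y : topologicalType) (Yd : T -> set Y) (ga : T -> Y -> Y)
  (Phi : set (S * X) -> set (T * Y)) (Psi : set (T * Y) -> set (S * X)) :=
  let G := germs mulS starS Xd in let H := germs mulT starT Yd in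
  (forall g, G g -> H (Phi g)) /\
      (forall h, H h -> G (Psi h)) /\
      (forall g, G g -> Psi (Phi g) = g) /\
      (forall h, H h -> Phi (Psi h) = h) /\
      (forall g1 g2 g3, G g1 -> G g2 -> G g3 ->
         germ_mul mulS starS Xd th g1 g2 g3 ->
         germ_mul mulT starT Yd ga (Phi g1) (Phi g2) (Phi g3)) /\
      (forall h1 h2 h3, H h1 -> H h2 -> H h3 ->
         germ_mul mulT starT Yd ga h1 h2 h3 ->
         germ_mul mulS starS Xd th (Psi h1) (Psi h2) (Psi h3)) /\
      (forall W, germ_open mulT starT Yd W ->
         germ_open mulS starS Xd [set g | G g /\ W (Phi g)]) /\
      (forall W, germ_open mulS starS Xd W ->
         germ_open mulT starT Yd [set h | H h /\ W (Psi h)]).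

Definition germ_groupoids_isomorphic
  (S : Type) (mulS : S -> S -> S) (starS : S -> S)
  (X : topologicalType) (Xd : S -> set X) (th : S -> X -> X)
  (T : Type) (mulT : T -> T -> T) (starT : T -> T)
  (Y : topologicalType) (Yd : T -> set Y) (ga : T -> Y -> Y) :=
  exists Phi Psi,
    germ_groupoid_iso mulS starS Xd th mulT starT Yd ga Phi Psi.

(* a map c : S * X -> T on S*X = {(s,x) | x in X_{s^*}} (S, T discrete) is
   continuous iff for each s it is locally constant in x on X_{s^*} *)
Definition cont_on_SX (S : Type) (star : S -> S) (X : topologicalType)
  (Xd : S -> set X) (T : Type) (c : S -> X -> T) :=
  forall s x, Xd (star s) x ->
    exists U : set X, [/\ open U, U x &
      forall y, U y -> Xd (star s) y -> c s y = c s x].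

Definition cont_orbit_equiv
  (S : Type) (mulS : S -> S -> S) (starS : S -> S)
  (X : topologicalType) (Xd : S -> set X) (th : S -> X -> X)
  (T : Type) (mulT : T -> T -> T) (starT : T -> T)
  (Y : topologicalType) (Yd : T -> set Y) (ga : T -> Y -> Y) :=
  exists (phi : X -> Y) (phiinv : Y -> X) (a : S -> X -> T) (b : T -> Y -> S),
    [/\
        cancel phi phiinv /\ cancel phiinv phi,
        continuous phi /\ continuous phiinv,
        cont_on_SX starS Xd a /\ cont_on_SX starT Yd b,
        (forall s x, Xd (starS s) x ->
           Yd (starT (a s x)) (phi x) /\
           phi (th s x) = ga (a s x) (phi x)) &
        (forall t y, Yd (starT t) y ->
           Xd (starS (b t y)) (phiinv y) /\
           phiinv (ga t y) = th (b t y) (phiinv y))].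

(* Main.v *)
Require Import Defs.
From mathcomp Require Import all_boot all_order.
From mathcomp Require Import all_classical all_reals all_analysis.
Local Open Scope classical_set_scope.
Set Implicit Arguments.
Unset Strict Implicit.

Lemma star_idem (S : Type) (mul : S -> S -> S) (star : S -> S) (e : S) :
  inverse_semigroup mul star -> idempotent_el mul e -> star e = e.
Proof. by case=> _ _ _ H4 ide; symmetry; apply: H4; rewrite !ide. Qed.

Lemma star_star (S : Type) (mul : S -> S -> S) (star : S -> S) (s : S) :
  inverse_semigroup mul star -> star (star s) = s.
Proof. by case=> _ H2 H3 H4; symmetry; apply: H4. Qed.

Lemma germ_refl (S : Type) (mul : S -> S -> S) (star : S -> S)
  (X : Type) (Xd : S -> set X) s x :
  inverse_semigroup mul star -> Xd (star s) x -> germ mul star Xd s x (s, x).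
Proof.
case=> H1 H2 _ _ xs; split=> //; exists s; split=> //;
  by rewrite /isg_le H1 H2.
Qed.

Lemma L_src (S : Type) (mul : S -> S -> S) (star : S -> S)
  (X : Type) (Xd : S -> set X) s x t y :
  inverse_semigroup mul star -> Xd (star s) x ->
  germ mul star Xd s x = germ mul star Xd t y -> x = y.
Proof.
move=> iS xs E; have := germ_refl iS xs; rewrite E; by case.
Qed.

Lemma L_rng (S : Type) (mul : S -> S -> S) (star : S -> S)
  (X : topologicalType) (Xd : S -> set X) (th : S -> X -> X) s x t :
  inverse_semigroup mul star -> top_partial_action mul star Xd th ->
  Xd (star s) x ->
  germ mul star Xd s x = germ mul star Xd t x -> th s x = th t x.
Proof.
move=> iS [_ [_ [_ [_ [_ [mono _]]]]]] xs E.
have := germ_refl iS xs; rewrite E => -[_ [u [us ut ux]]].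
by rewrite -(mono _ _ us _ ux).2 (mono _ _ ut _ ux).2.
Qed.

Lemma th_idem (S : Type) (mul : S -> S -> S) (star : S -> S)
  (X : topologicalType) (Xd : S -> set X) (th : S -> X -> X) e x :
  inverse_semigroup mul star -> top_partial_action mul star Xd th ->
  idempotent_el mul e -> Xd e x -> th e x = x.
Proof.
move=> iS [_ [into [_ [inv [comp _]]]]] ide xe.
have se := star_idem iS ide.
have xe' : Xd (star e) x by rewrite se.
have ye : Xd (star e) (th e x) by rewrite se; apply: into.
have := (comp e e x xe' ye).2; rewrite ide => E.
by have := inv e x xe'; rewrite se -E.
Qed.

Lemma ML (S : Type) (mul : S -> S -> S) (star : S -> S)
  (X : topologicalType) (Xd : S -> set X) (th : S -> X -> X) g1 g2 g3
  s1 x1 s2 x2 s3 x3 :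
  inverse_semigroup mul star -> top_partial_action mul star Xd th ->
  germ_mul mul star Xd th g1 g2 g3 ->
  Xd (star s1) x1 -> g1 = germ mul star Xd s1 x1 ->
  Xd (star s2) x2 -> g2 = germ mul star Xd s2 x2 ->
  Xd (star s3) x3 -> g3 = germ mul star Xd s3 x3 ->
  x1 = th s2 x2 /\ x3 = x2.
Proof.
move=> iS tS [s [x [t [y [[xs yt xy] [e1 e2 e3]]]]]] v1 E1 v2 E2 v3 E3.
have h1 := L_src iS v1 (etrans (esym E1) e1).
have h2 := L_src iS v2 (etrans (esym E2) e2).
have h3 := L_src iS v3 (etrans (esym E3) e3).
subst x1 x2 x3; split=> //.
by rewrite xy (L_rng iS tS v2 (etrans (esym E2) e2)).
Qed.

Lemma half_spec
  (S : Type) (mulS : S -> S -> S) (starS : S -> S)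
  (X : topologicalType) (Xd : S -> set X) (th : S -> X -> X)
  (T : Type) (mulT : T -> T -> T) (starT : T -> T)
  (Y : topologicalType) (Yd : T -> set Y) (ga : T -> Y -> Y) Phi Psi :
  inverse_semigroup mulS starS -> inverse_semigroup mulT starT ->
  top_partial_action mulS starS Xd th -> top_partial_action mulT starT Yd ga ->
  germ_groupoid_iso mulS starS Xd th mulT starT Yd ga Phi Psi ->
  exists phi : X -> Y, forall s x, Xd (starS s) x ->
    exists t, [/\ Yd (starT t) (phi x),
      Phi (germ mulS starS Xd s x) = germ mulT starT Yd t (phi x) &
      ga t (phi x) = phi (th s x)].
Proof.
move=> iS iT tS tT [PhiG [_ [_ [_ [hom _]]]]].
have tS' := tS.
case: tS' => [_ [into [_ [inv [comp [mono cover]]]]]].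
have GG : forall s x, Xd (starS s) x -> germs mulS starS Xd (germ mulS starS Xd s x).
  by move=> s x xs; exists s, x.
have HR : forall g, germs mulS starS Xd g -> exists t y,
    Yd (starT t) y /\ Phi g = germ mulT starT Yd t y.
  move=> g /PhiG [t [y [yt E]]]; by exists t, y.
have : forall x : X, exists y : Y, exists e t, [/\ idempotent_el mulS e, Xd e x,
   Yd (starT t) y & Phi (germ mulS starS Xd e x) = germ mulT starT Yd t y].
  move=> x; have [e [ide xe]] := cover x.
  have xe' : Xd (starS e) x by rewrite (star_idem iS ide).
  have [t [y [yt E]]] := HR _ (GG _ _ xe').
  by exists y, e, t.
case/choice=> phi Hphi.
have SRC : forall s x t y, Xd (starS s) x -> Yd (starT t) y ->
    Phi (germ mulS starS Xd s x) = germ mulT starT Yd t y -> y = phi x.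
  move=> s x t y xs yt E.
  have ys : Xd (starS (starS s)) (th s x) by rewrite (star_star s iS); apply: into.
  have [kv kth] := comp _ _ _ xs ys.
  have [e [t0 [ide xe yt0 E0]]] := Hphi x.
  have xe' : Xd (starS e) x by rewrite (star_idem iS ide).
  have the := th_idem iS tS ide xe.
  have k2v : Xd (starS (mulS (mulS (starS s) s) e)) x.
    by apply: (comp _ _ _ xe' _).1; rewrite the.
  have [t1 [y1 [y1t E1]]] := HR _ (GG _ _ ys).
  have [t2 [y2 [y2t E2]]] := HR _ (GG _ _ kv).
  have [t3 [y3 [y3t E3]]] := HR _ (GG _ _ k2v).
  have m1 := hom _ _ _ (GG _ _ ys) (GG _ _ xs) (GG _ _ kv).
  have m1' : germ_mul mulS starS Xd th (germ mulS starS Xd (starS s) (th s x))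
     (germ mulS starS Xd s x) (germ mulS starS Xd (mulS (starS s) s) x).
    by exists (starS s), (th s x), s, x.
  have [_ h1] := ML iT tT (m1 m1') y1t E1 yt E y2t E2.
  have m2 := hom _ _ _ (GG _ _ kv) (GG _ _ xe') (GG _ _ k2v).
  have m2' : germ_mul mulS starS Xd th (germ mulS starS Xd (mulS (starS s) s) x)
     (germ mulS starS Xd e x) (germ mulS starS Xd (mulS (mulS (starS s) s) e) x).
    by exists (mulS (starS s) s), x, e, x.
  have [h2 _] := ML iT tT (m2 m2') y2t E2 yt0 E0 y3t E3.
  have m3 := hom _ _ _ (GG _ _ xe') (GG _ _ xe') (GG _ _ xe').
  have m3' : germ_mul mulS starS Xd th (germ mulS starS Xd e x)
     (germ mulS starS Xd e x) (germ mulS starS Xd e x).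
    by exists e, x, e, x; split; [split=> //| split=> //; rewrite ide].
  have [h3 _] := ML iT tT (m3 m3') yt0 E0 yt0 E0 yt0 E0.
  by rewrite -h1 h2 -h3.
exists phi => s x xs.
have ys : Xd (starS (starS s)) (th s x) by rewrite (star_star s iS); apply: into.
have [kv kth] := comp _ _ _ xs ys.
have [t [y [yt E]]] := HR _ (GG _ _ xs).
have [t1 [y1 [y1t E1]]] := HR _ (GG _ _ ys).
have [t2 [y2 [y2t E2]]] := HR _ (GG _ _ kv).
have m1 := hom _ _ _ (GG _ _ ys) (GG _ _ xs) (GG _ _ kv).
have m1' : germ_mul mulS starS Xd th (germ mulS starS Xd (starS s) (th s x))
   (germ mulS starS Xd s x) (germ mulS starS Xd (mulS (starS s) s) x).
  by exists (starS s), (th s x), s, x.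
have [h1 _] := ML iT tT (m1 m1') y1t E1 yt E y2t E2.
have ey := SRC _ _ _ _ xs yt E.
have ey1 := SRC _ _ _ _ ys y1t E1.
subst y; exists t; split=> //.
by rewrite -ey1 h1.
Qed.

Lemma half_cont
  (S : Type) (mulS : S -> S -> S) (starS : S -> S)
  (X : topologicalType) (Xd : S -> set X) (th : S -> X -> X)
  (T : Type) (mulT : T -> T -> T) (starT : T -> T)
  (Y : topologicalType) (Yd : T -> set Y) (ga : T -> Y -> Y) Phi Psi
  (phi : X -> Y) :
  inverse_semigroup mulS starS -> inverse_semigroup mulT starT ->
  top_partial_action mulS starS Xd th -> top_partial_action mulT starT Yd ga ->
  germ_groupoid_iso mulS starS Xd th mulT starT Yd ga Phi Psi ->
  (forall s x, Xd (starS s) x ->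
    exists t, [/\ Yd (starT t) (phi x),
      Phi (germ mulS starS Xd s x) = germ mulT starT Yd t (phi x) &
      ga t (phi x) = phi (th s x)]) ->
  continuous phi.
Proof.
move=> iS iT tS tT [_ [_ [_ [_ [_ [_ [contPhi _]]]]]]] sp.
have tS' := tS; case: tS' => [_ [_ [_ [_ [_ [_ cover]]]]]].
have tT' := tT; case: tT' => [openY _].
apply/continuousP => B oB; rewrite openE => x Bx.
have [e [ide xe]] := cover x.
have xe' : Xd (starS e) x by rewrite (star_idem iS ide).
have [t [yt E _]] := sp _ _ xe'.
pose W := germ_basic mulT starT Yd t (B `&` Yd (starT t)).
have Wo : germ_open mulT starT Yd W.
  split; first by move=> g [y [_ yt'] ->]; exists t, y.
  move=> g Wg; exists t, (B `&` Yd (starT t)); split=> //.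
  exact: openI.
have [_ Po] := contPhi W Wo.
have [|s' [U [oU UX [x' Ux' Eu] sub]]] := Po (germ mulS starS Xd e x).
  by split; [exists e, x | exists (phi x)].
have ex' := L_src iS xe' Eu; subst x'.
rewrite /interior; apply: (@filterS _ _ _ U); last first.
  by apply: open_nbhs_nbhs; split.
move=> z Uz; have [_ [y [By yt'] E']] := sub (germ mulS starS Xd s' z) (ex_intro2 _ _ z Uz erefl).
have [t'' [yt'' E'' _]] := sp _ _ (UX z Uz).
have := L_src iT yt'' (etrans (esym E'') E'); rewrite /preimage /= => ->.
done.
Qed.

Lemma half_a
  (S : Type) (mulS : S -> S -> S) (starS : S -> S)
  (X : topologicalType) (Xd : S -> set X) (th : S -> X -> X)
  (T : Type) (mulT : T -> T -> T) (starT : T -> T)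
  (Y : topologicalType) (Yd : T -> set Y) (ga : T -> Y -> Y) Phi Psi
  (phi : X -> Y) (t0 : T) :
  inverse_semigroup mulS starS -> inverse_semigroup mulT starT ->
  top_partial_action mulS starS Xd th -> top_partial_action mulT starT Yd ga ->
  germ_groupoid_iso mulS starS Xd th mulT starT Yd ga Phi Psi ->
  (forall s, ultraparacompact (Xd s)) ->
  (forall s x, Xd (starS s) x ->
    exists t, [/\ Yd (starT t) (phi x),
      Phi (germ mulS starS Xd s x) = germ mulT starT Yd t (phi x) &
      ga t (phi x) = phi (th s x)]) ->
  exists a : S -> X -> T, cont_on_SX starS Xd a /\
    forall s x, Xd (starS s) x ->
      Yd (starT (a s x)) (phi x) /\ phi (th s x) = ga (a s x) (phi x).
Proof.
move=> iS iT tS tT [_ [_ [_ [_ [_ [_ [contPhi _]]]]]]] UP sp.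
have tS' := tS; case: tS' => [openX [_ [_ [_ [_ [mono _]]]]]].
have tT' := tT; case: tT' => [openY _].
suff : forall s, exists a_s : X -> T,
  (forall x, Xd (starS s) x -> exists U : set X, [/\ open U, U x &
      forall y, U y -> Xd (starS s) y -> a_s y = a_s x]) /\
  (forall x, Xd (starS s) x ->
      Yd (starT (a_s x)) (phi x) /\ phi (th s x) = ga (a_s x) (phi x)).
  case/choice=> a Ha; exists a; split.
    by move=> s x xs; exact: (Ha s).1.
  by move=> s x xs; exact: (Ha s).2.
move=> s.
pose good z t := Yd (starT t) (phi z) /\ phi (th s z) = ga t (phi z).
pose Cov := [set V : set X | exists t (Ob : set X),
   [/\ open Ob, V = Xd (starS s) `&` Ob & forall z, V z -> good z t]].
have covO : forall V, Cov V -> rel_open (Xd (starS s)) V.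
  by move=> V [t [Ob [oO -> _]]]; exists Ob.
have covU : \bigcup_(V in Cov) V = Xd (starS s).
  apply/seteqP; split.
    by move=> z [V [t [Ob [_ -> _]]]] [].
  move=> x xs.
  have [t [yt E _]] := sp _ _ xs.
  pose W := germ_basic mulT starT Yd t (Yd (starT t)).
  have Wo : germ_open mulT starT Yd W.
    split; first by move=> g [y yt' ->]; exists t, y.
    by move=> g Wg; exists t, (Yd (starT t)); split.
  have [_ Po] := contPhi W Wo.
  have [|s' [U [oU UX [x' Ux' Eu] sub]]] := Po (germ mulS starS Xd s x).
    by split; [exists s, x | exists (phi x)].
  have ex' := L_src iS xs Eu; subst x'.
  have := germ_refl iS xs; rewrite Eu => -[_ [u [us us' xu]]].
  exists (Xd (starS s) `&` (U `&` Xd (starS u))); last by split.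
  exists t, (U `&` Xd (starS u)); split=> //.
    exact: openI.
  move=> z [zs [Uz zu]].
  have [_ [y yt' E']] := sub (germ mulS starS Xd s' z) (ex_intro2 _ _ z Uz erefl).
  have [t'' [yt'' E'' R'']] := sp _ _ (UX z Uz).
  have ey := L_src iT yt'' (etrans (esym E'') E'); subst y.
  split=> //.
  rewrite -(mono _ _ us _ zu).2 (mono _ _ us' _ zu).2 -R''.
  exact: (L_rng iT tT yt'' (etrans (esym E'') E')).
have [R [Rcl Rref Rdisj RU]] := UP (starS s) Cov covO covU.
have : forall x, exists W : set X, Xd (starS s) x -> R W /\ W x.
  move=> x; have [xs|nxs] := pselect (Xd (starS s) x); last by exists set0.
  move: xs; rewrite -RU => -[W RW Wx]; by exists W.
case/choice=> bl Hbl.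
have : forall W : set X, exists t, R W -> forall z, W z -> good z t.
  move=> W; have [RW|nRW] := pselect (R W); last by exists t0.
  have [V CV WV] := Rref W RW.
  have [t [Ob [_ EV gV]]] := CV.
  by exists t => _ z Wz; apply: gV; apply: WV.
case/choice=> fW HfW.
exists (fun x => fW (bl x)); split; last first.
  move=> x xs; have [RW Wx] := Hbl x xs.
  have [] := HfW _ RW x Wx; done.
move=> x xs; have [RW Wx] := Hbl x xs.
have [[Ob [oO EW]] _] := Rcl _ RW.
exists Ob; split=> //.
  by move: Wx; rewrite EW => -[].
move=> y Oy ys.
have Wy : bl x y by rewrite EW.
have [RWy Wyy] := Hbl y ys.
have [eq|neq] := pselect (bl y = bl x); first by rewrite eq.
have := Rdisj _ _ RWy RW neq.
move/seteqP => [+ _] => /(_ y (conj Wyy Wy)); done.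
Qed.

Lemma iso_sym
  (S : Type) (mulS : S -> S -> S) (starS : S -> S)
  (X : topologicalType) (Xd : S -> set X) (th : S -> X -> X)
  (T : Type) (mulT : T -> T -> T) (starT : T -> T)
  (Y : topologicalType) (Yd : T -> set Y) (ga : T -> Y -> Y) Phi Psi :
  germ_groupoid_iso mulS starS Xd th mulT starT Yd ga Phi Psi ->
  germ_groupoid_iso mulT starT Yd ga mulS starS Xd th Psi Phi.
Proof.
rewrite /germ_groupoid_iso /=.
by move=> [h1 [h2 [h3 [h4 [h5 [h6 [h7 h8]]]]]]]; do 7 (split=> //).
Qed.

Lemma half_cancel
  (S : Type) (mulS : S -> S -> S) (starS : S -> S)
  (X : topologicalType) (Xd : S -> set X) (th : S -> X -> X)
  (T : Type) (mulT : T -> T -> T) (starT : T -> T)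
  (Y : topologicalType) (Yd : T -> set Y) (ga : T -> Y -> Y) Phi Psi
  (phi : X -> Y) (psi : Y -> X) :
  inverse_semigroup mulS starS -> inverse_semigroup mulT starT ->
  top_partial_action mulS starS Xd th -> top_partial_action mulT starT Yd ga ->
  germ_groupoid_iso mulS starS Xd th mulT starT Yd ga Phi Psi ->
  (forall s x, Xd (starS s) x ->
    exists t, [/\ Yd (starT t) (phi x),
      Phi (germ mulS starS Xd s x) = germ mulT starT Yd t (phi x) &
      ga t (phi x) = phi (th s x)]) ->
  (forall t y, Yd (starT t) y ->
    exists s, [/\ Xd (starS s) (psi y),
      Psi (germ mulT starT Yd t y) = germ mulS starS Xd s (psi y) &
      th s (psi y) = psi (ga t y)]) ->
  cancel phi psi.
Proof.
move=> iS iT tS tT [_ [_ [PsiPhi _]]] sp sq x.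
have tS' := tS; case: tS' => [_ [_ [_ [_ [_ [_ cover]]]]]].
have [e [ide xe]] := cover x.
have xe' : Xd (starS e) x by rewrite (star_idem iS ide).
have [t [yt E _]] := sp _ _ xe'.
have [s' [xs' E' _]] := sq _ _ yt.
have := PsiPhi (germ mulS starS Xd e x) (ex_intro _ e (ex_intro _ x (conj xe' erefl))).
rewrite E E' => H.
exact: esym (L_src iS xe' (esym H)).
Qed.

Unset Implicit Arguments.

Theorem theorem8p9
  (S : Type) (mulS : S -> S -> S) (starS : S -> S)
  (T : Type) (mulT : T -> T -> T) (starT : T -> T)
  (X Y : topologicalType)
  (Xd : S -> set X) (th : S -> X -> X)
  (Yd : T -> set Y) (ga : T -> Y -> Y) :
  inverse_semigroup mulS starS ->
  inverse_semigroup mulT starT ->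
  top_partial_action mulS starS Xd th ->
  top_partial_action mulT starT Yd ga ->
  almost_ample mulS starS Xd th ->
  almost_ample mulT starT Yd ga ->
  germ_groupoids_isomorphic mulS starS Xd th mulT starT Yd ga ->
  cont_orbit_equiv mulS starS Xd th mulT starT Yd ga.
Proof.
move=> iS iT tS tT [_ _ uS] [_ _ uT] [Phi [Psi iso]].
have iso' := iso_sym iso.
have [phi sp] := half_spec iS iT tS tT iso.
have [psi sq] := half_spec iT iS tT tS iso'.
have c1 := half_cancel iS iT tS tT iso sp sq.
have c2 := half_cancel iT iS tT tS iso' sq sp.
have k1 := half_cont iS iT tS tT iso sp.
have k2 := half_cont iT iS tT tS iso' sq.
exists phi, psi.
have [[x0 _]|nX] := pselect (exists x : X, True).
  have tS' := tS; case: tS' => [_ [_ [_ [_ [_ [_ cover]]]]]].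
  have [e [ide xe]] := cover x0.
  have xe' : Xd (starS e) x0 by rewrite (star_idem iS ide).
  have [t0 _] := sp _ _ xe'.
  have [a [ca ga']] := half_a t0 iS iT tS tT iso uS sp.
  have [b [cb gb]] := half_a e iT iS tT tS iso' uT sq.
  by exists a, b; split=> //.
have nY : forall y : Y, False by move=> y; apply: nX; exists (psi y).
exists (fun s x => False_rect T (nX (ex_intro _ x I))).
exists (fun t y => False_rect S (nY y)).
split=> //.
- by split=> ? x; [case: nX; exists x | case: (nY x)].
Qed.
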